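(* In $NOM$, writing $\phi\perp\!\!\!\perp\psi$ for $(\phi\rightarrow(\psi\rightarrow\phi))\wedge(\psi\rightarrow(\phi\rightarrow\psi))$, the following rules are derivable for all finite sequences $\Gamma,\Delta$ of formulas and all formulas $\phi,\psi,\chi$: from $\Gamma,\phi,\psi\vdash\phi$ and $\Gamma,\psi,\phi\vdash\psi$ infer $\Gamma\vdash\phi\perp\!\!\!\perp\psi$; from $\Gamma\vdash\phi\perp\!\!\!\perp\psi$ and $\Gamma,\phi,\psi,\Delta\vdash\chi$ infer $\Gamma,\psi,\phi,\Delta\vdash\chi$; from $\Gamma\vdash\phi\perp\!\!\!\perp\psi$ and $\Gamma,\psi,\phi,\Delta\vdash\chi$ infer $\Gamma,\phi,\psi,\Delta\vdash\chi$.
   Context: The propositional deductive system $NOM$: formulas are built from propositional letters using $\wedge$, $\rightarrow$, $\neg$. Sequents are $\phi_1,\ldots,\phi_n\vdash\psi$ ($n\ge0$) with antecedent a finite ordered sequence; commas denote concatenation. With $\Gamma$ a finite possibly empty sequence of formulas and $\phi,\psi,\chi$ formulas, the rules of $NOM$ are: (assumption) $\Gamma,\phi\vdash\phi$; (cut) $\Gamma\vdash\phi$, $\Gamma,\phi\vdash\psi$ $\Rightarrow$ $\Gamma\vdash\psi$; (paste) $\Gamma\vdash\phi$, $\Gamma\vdash\psi$ $\Rightarrow$ $\Gamma,\phi\vdash\psi$; (compatible exchange) $\Gamma,\phi,\psi\vdash\phi$, $\Gamma,\phi,\psi\vdash\chi$, $\Gamma,\psi,\phi\vdash\psi$ $\Rightarrow$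 $\Gamma,\psi,\phi\vdash\chi$; ($\wedge$-intro) $\Gamma\vdash\phi$, $\Gamma\vdash\psi$ $\Rightarrow$ $\Gamma\vdash\phi\wedge\psi$; ($\wedge$-elim) $\Gamma\vdash\phi\wedge\psi$ $\Rightarrow$ $\Gamma\vdash\phi$ and $\Rightarrow$ $\Gamma\vdash\psi$; ($\rightarrow$-intro) $\Gamma,\phi\vdash\psi$ $\Rightarrow$ $\Gamma\vdash\phi\rightarrow\psi$; ($\rightarrow$-elim) $\Gamma\vdash\phi\rightarrow\psi$ $\Rightarrow$ $\Gamma,\phi\vdash\psi$; (excluded middle) $\Gamma,\phi\vdash\psi$, $\Gamma,\neg\phi\vdash\psi$ $\Rightarrow$ $\Gamma\vdash\psi$; (explosion) $\Gamma\vdash\neg\phi$ $\Rightarrow$ $\Gamma,\phi\vdash\psi$. A rule schema is derivable if in every instance its conclusion can be derived from its premises using these rules. *)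

(* Defs.v *)
From Stdlib Require Import List.
Import ListNotations.

Inductive formula : Type :=
| Var : nat -> formula
| And : formula -> formula -> formula
| Imp : formula -> formula -> formula
| Neg : formula -> formula.

Record sequent : Type := Seq { ante : list formula ; succ : formula }.

Inductive NOM_from (P : sequent -> Prop) : sequent -> Prop :=
| nom_prem : forall s, P s -> NOM_from P s
| nom_assumption : forall G phi, NOM_from P (Seq (G ++ [phi]) phi)
| nom_cut : forall G phi psi,
    NOM_from P (Seq G phi) -> NOM_from P (Seq (G ++ [phi]) psi) ->
    NOM_from P (Seq G psi)
| nom_paste : forall G phi psi,
    NOM_from P (Seq G phi) -> NOM_from P (Seq G psi) ->
    NOM_from P (Seq (G ++ [phi]) psi)
| nom_exch : forall G phi psi chi,
    NOM_from P (Seq (G ++ [phi; psi]) phi) ->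
    NOM_from P (Seq (G ++ [phi; psi]) chi) ->
    NOM_from P (Seq (G ++ [psi; phi]) psi) ->
    NOM_from P (Seq (G ++ [psi; phi]) chi)
| nom_and_i : forall G phi psi,
    NOM_from P (Seq G phi) -> NOM_from P (Seq G psi) ->
    NOM_from P (Seq G (And phi psi))
| nom_and_e1 : forall G phi psi,
    NOM_from P (Seq G (And phi psi)) -> NOM_from P (Seq G phi)
| nom_and_e2 : forall G phi psi,
    NOM_from P (Seq G (And phi psi)) -> NOM_from P (Seq G psi)
| nom_imp_i : forall G phi psi,
    NOM_from P (Seq (G ++ [phi]) psi) -> NOM_from P (Seq G (Imp phi psi))
| nom_imp_e : forall G phi psi,
    NOM_from P (Seq G (Imp phi psi)) -> NOM_from P (Seq (G ++ [phi]) psi)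
| nom_em : forall G phi psi,
    NOM_from P (Seq (G ++ [phi]) psi) -> NOM_from P (Seq (G ++ [Neg phi]) psi) ->
    NOM_from P (Seq G psi)
| nom_explosion : forall G phi psi,
    NOM_from P (Seq G (Neg phi)) -> NOM_from P (Seq (G ++ [phi]) psi).

Definition derivable_rule (prems : list sequent) (concl : sequent) : Prop :=
  NOM_from (fun s => In s prems) concl.

Definition indep (phi psi : formula) : formula :=
  And (Imp phi (Imp psi phi)) (Imp psi (Imp phi psi)).

(* Main.v *)
Require Import Defs.
From Stdlib Require Import List.
Import ListNotations.

Fixpoint imps (D : list formula) (c : formula) : formula :=
  match D with [] => c | a :: D' => Imp a (imps D' c) end.

Lemma curry P : forall D G c, NOM_from P (Seq (G ++ D) c) -> NOM_from P (Seq G (imps D c)).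
Proof.
  induction D as [|a D IH]; intros G c H; simpl.
  - rewrite app_nil_r in H; exact H.
  - apply nom_imp_i. apply IH. rewrite <- app_assoc. exact H.
Qed.

Lemma uncurry P : forall D G c, NOM_from P (Seq G (imps D c)) -> NOM_from P (Seq (G ++ D) c).
Proof.
  induction D as [|a D IH]; intros G c H; simpl in *.
  - rewrite app_nil_r; exact H.
  - replace (G ++ a :: D) with ((G ++ [a]) ++ D) by (rewrite <- app_assoc; reflexivity).
    apply IH. apply nom_imp_e. exact H.
Qed.

Lemma swap P G D a b c :
  NOM_from P (Seq (G ++ [a; b]) a) -> NOM_from P (Seq (G ++ [b; a]) b) ->
  NOM_from P (Seq (G ++ [a; b] ++ D) c) -> NOM_from P (Seq (G ++ [b; a] ++ D) c).
Proof.
  intros H1 H2 H3. rewrite app_assoc. apply uncurry.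
  apply nom_exch; auto. apply curry. rewrite <- app_assoc. exact H3.
Qed.

Lemma get1 P G a b : NOM_from P (Seq G (indep a b)) -> NOM_from P (Seq (G ++ [a; b]) a).
Proof.
  intro H. change [a; b] with ([a] ++ [b]). rewrite app_assoc.
  apply nom_imp_e, nom_imp_e. eapply nom_and_e1; exact H.
Qed.

Lemma get2 P G a b : NOM_from P (Seq G (indep a b)) -> NOM_from P (Seq (G ++ [b; a]) b).
Proof.
  intro H. change [b; a] with ([b] ++ [a]). rewrite app_assoc.
  apply nom_imp_e, nom_imp_e. eapply nom_and_e2; exact H.
Qed.

Theorem proposition4p7 :
  forall (G D : list formula) (phi psi chi : formula),
    derivable_rule
      [Seq (G ++ [phi; psi]) phi; Seq (G ++ [psi; phi]) psi]
      (Seq G (indep phi psi))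
    /\ derivable_rule
      [Seq G (indep phi psi); Seq (G ++ [phi; psi] ++ D) chi]
      (Seq (G ++ [psi; phi] ++ D) chi)
    /\ derivable_rule
      [Seq G (indep phi psi); Seq (G ++ [psi; phi] ++ D) chi]
      (Seq (G ++ [phi; psi] ++ D) chi).
Proof.
  intros G D phi psi chi. unfold derivable_rule. split; [|split].
  - apply nom_and_i; apply nom_imp_i, nom_imp_i; apply nom_prem;
      rewrite <- app_assoc; simpl; auto.
  - assert (Hi : NOM_from (fun s => In s [Seq G (indep phi psi); Seq (G ++ [phi; psi] ++ D) chi]) (Seq G (indep phi psi))) by (apply nom_prem; simpl; auto).
    apply swap; [apply get1 | apply get2 | apply nom_prem; simpl; auto]; exact Hi.
  - assert (Hi : NOM_from (fun s => In s [Seq G (indep phi psi); Seq (G ++ [psi; phi] ++ D) chi]) (Seq G (indep phi psi))) by (apply nom_prem; simpl; auto).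
    apply swap; [ | | apply nom_prem; simpl; auto].
    + apply get2 with (a := phi); exact Hi.
    + apply get1 with (b := psi); exact Hi.
Qed.
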